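(* Let $R$ be a ring and let $M$ be a right $R$-module which is an epimorphic image of a right $R$-module that is both projective and injective. Then $M$ is subprojective extension-reflecting; that is, for every short exact sequence of right $R$-modules $0\to A\to B\to C\to 0$, if $M\in \underline{\mathfrak{Pr}}^{-1}(A)\cap \underline{\mathfrak{Pr}}^{-1}(C)$, then $M\in \underline{\mathfrak{Pr}}^{-1}(B)$.
   Context: $R$ is an associative ring with identity and modules are unital right $R$-modules. For right $R$-modules $X$ and $Y$, write $X\in \underline{\mathfrak{Pr}}^{-1}(Y)$ (the subprojectivity domain of $Y$) if $Y$ is $X$-subprojective, meaning: for every epimorphism $g\colon B\to X$ and every homomorphism $f\colon Y\to X$ there exists a homomorphism $h\colon Y\to B$ with $g h=f$. *)

(* Defs.v *)
From HB Require Import structures.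
From mathcomp Require Import all_boot all_algebra.
Set Implicit Arguments. Unset Strict Implicit. Unset Printing Implicit Defensive.
Import GRing.Theory.
Local Open Scope ring_scope.

(* Right R-modules are modelled as left modules over the converse ring R^c. *)
Notation rmodType R := (lmodType R^c).

Definition surjective (A B : Type) (f : A -> B) : Prop := forall b, exists a, f a = b.

Definition projective (R : pzRingType) (P : rmodType R) : Prop :=
  forall (B C : rmodType R) (g : {linear B -> C}) (f : {linear P -> C}),
    surjective g -> exists h : {linear P -> B}, forall x, g (h x) = f x.

Definition injective_module (R : pzRingType) (E : rmodType R) : Prop :=
  forall (A B : rmodType R) (i : {linear A -> B}) (f : {linear A -> E}),
    injective i -> exists h : {linear B -> E}, forall x, h (i x) = f x.

(* Y is X-subprojective, i.e. X belongs to the subprojectivity domain of Y. *)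
Definition subprojective (R : pzRingType) (Y X : rmodType R) : Prop :=
  forall (B : rmodType R) (g : {linear B -> X}) (f : {linear Y -> X}),
    surjective g -> exists h : {linear Y -> B}, forall y, g (h y) = f y.

Definition short_exact (R : pzRingType) (A B C : rmodType R)
    (f : {linear A -> B}) (g : {linear B -> C}) : Prop :=
  [/\ injective f, surjective g &
      forall b, g b = 0 <-> exists a, f a = b].

(* Main.v *)
Require Import Defs.
From HB Require Import structures.
From mathcomp Require Import all_boot all_algebra.
From Stdlib Require Import ClassicalEpsilon.
Import GRing.Theory.
Local Open Scope ring_scope.

Section MkLin.
Variables (R : pzRingType) (U V : lmodType R) (f : U -> V) (Hf : linear f).
Definition mkfun := f.
HB.instance Definition _ := GRing.isLinear.Build R U V *:%R mkfun Hf.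
Definition mklin : {linear U -> V} := mkfun.
Lemma mklinE x : mklin x = f x. Proof. by []. Qed.
End MkLin.
Arguments mklin {R U V f} Hf.
Arguments mklinE {R U V f} Hf x.

Theorem mainTheorem2 (R : pzRingType) (M P : rmodType R) (p : {linear P -> M}) :
  surjective p -> projective P -> injective_module P ->
  forall (A B C : rmodType R) (f : {linear A -> B}) (g : {linear B -> C}),
    short_exact f g -> subprojective A M -> subprojective C M ->
    subprojective B M.
Proof.
move=> Sp Pp Ip A B C f g [fi gs ex] SA SC D q h qs.
have [l Hl] := Pp D M q p qs.
suff [k Hk] : exists k : {linear B -> P}, forall y, p (k y) = h y.
  have Hlk : linear (fun y => l (k y)) by move=> r u v; rewrite !linearP.
  by exists (mklin Hlk) => y; rewrite mklinE Hl Hk.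
have Hhf : linear (fun x => h (f x)) by move=> r u v; rewrite !linearP.
have [a Ha] := SA P p (mklin Hhf) Sp.
have [a' Ha'] := Ip A B f a fi.
pose e := fun b => h b - p (a' b).
have He : linear e.
  move=> r u v; rewrite /e (linearP h) (linearP a') (linearP p).
  by rewrite scalerBr opprD addrACA.
have eB u v : e (u - v) = e u - e v.
  by have := linearB (mklin He) u v; rewrite !mklinE.
have ef x : e (f x) = 0 by rewrite /e Ha' Ha mklinE subrr.
pose s := fun c => proj1_sig (constructive_indefinite_description _ (gs c)).
have Hs c : g (s c) = c by rewrite /s; case: constructive_indefinite_description.
pose c := fun x => e (s x).
have key b : e b = c (g b).
  have : g (b - s (g b)) = 0 by rewrite linearB Hs subrr.
  case/ex => a0 Ha0.
  have := ef a0; rewrite Ha0 eB => /eqP.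
  by rewrite subr_eq0 => /eqP.
have Hc : linear c.
  move=> r u v.
  have -> : r *: u + v = g (r *: s u + s v) by rewrite linearP !Hs.
  by rewrite -key; have := linearP (mklin He) r (s u) (s v); rewrite !mklinE.
have [d Hd] := SC P p (mklin Hc) Sp.
have Hk : linear (fun b => a' b + d (g b)).
  by move=> r u v; rewrite !linearP scalerDr addrACA.
exists (mklin Hk) => y; rewrite mklinE linearD Hd mklinE.
rewrite -key /e.
by rewrite addrC subrK.
Qed.
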